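(* Let $m>n$ be integers, $\Lambda=I_m$, $\theta_*\in\mathbb{R}^m$, $\sigma^2\ge0$. Define the deterministic equivalents for the min-norm random features interpolator as follows. If $p>n$ (over-parameterized), with $\lambda_n$ solving $\operatorname{Tr}(\Lambda(\Lambda+\lambda_nI)^{-1})=n$: $\mathsf{B}_{\mathsf{N},0}=\frac{p\langle\theta_*,(\Lambda+\lambda_nI)^{-1}\theta_*\rangle}{p-n}$, $\mathsf{V}_{\mathsf{N},0}=\frac{\sigma^2p}{\lambda_n(p-n)}$, $\mathsf{B}_{\mathsf{R},0}=\frac{n\lambda_n^2\langle\theta_*,(\Lambda+\lambda_nI)^{-2}\theta_*\rangle}{n-\operatorname{Tr}(\Lambda^2(\Lambda+\lambda_nI)^{-2})}+\frac{n\lambda_n\langle\theta_*,(\Lambda+\lambda_nI)^{-1}\theta_*\rangle}{p-n}$, $\mathsf{V}_{\mathsf{R},0}=\frac{\sigma^2\operatorname{Tr}(\Lambda^2(\Lambda+\lambda_nI)^{-2})}{n-\operatorname{Tr}(\Lambda^2(\Lambda+\lambda_nI)^{-2})}+\frac{\sigma^2n}{p-n}$. If $p<n$ (under-parameterized), with $\lambda_p$ solving $\operatorname{Tr}(\Lambda(\Lambda+\lambda_pI)^{-1})=p$: $\mathsf{B}_{\mathsf{N},0}=\frac{p\langle\theta_*,\Lambda(\Lambda+\lambda_pI)^{-2}\theta_*\rangle}{n-\operatorname{Tr}(\Lambda^2(\Lambda+\lambda_pI)^{-2})}+\frac{p\langle\theta_*,(\Lambda+\lambda_pI)^{-1}\theta_*\rangle}{n-p}$,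 $\mathsf{V}_{\mathsf{N},0}=\frac{\sigma^2p}{\lambda_p(n-p)}$, $\mathsf{B}_{\mathsf{R},0}=\frac{n\lambda_p\langle\theta_*,(\Lambda+\lambda_pI)^{-1}\theta_*\rangle}{n-p}$, $\mathsf{V}_{\mathsf{R},0}=\frac{\sigma^2p}{n-p}$. Let $\mathsf{R}_0=\mathsf{B}_{\mathsf{R},0}+\mathsf{V}_{\mathsf{R},0}$ and $\mathsf{N}_0=\mathsf{B}_{\mathsf{N},0}+\mathsf{V}_{\mathsf{N},0}$. Then in the over-parameterized regime $p>n$, $$\mathsf{R}_0=\frac{m-n}{n}\mathsf{N}_0+\frac{2n-m}{m-n}\sigma^2,$$ and in the under-parameterized regime $p<n$, $$\big(\mathsf{V}_{\mathsf{R},0}\big)^2=\frac{m-n}{n}\mathsf{V}_{\mathsf{R},0}\mathsf{V}_{\mathsf{N},0}+\frac{m\sigma^2}{n}\mathsf{V}_{\mathsf{N},0},$$ $$(m-n)\mathsf{B}_{\mathsf{N},0}\big(m\mathsf{B}_{\mathsf{R},0}-n\|\theta_*\|_2^2\big)\big(m\mathsf{B}_{\mathsf{R},0}^2-n\|\theta_*\|_2^4\big)=nm\big(\mathsf{B}_{\mathsf{R},0}-\|\theta_*\|_2^2\big)^2\big[m\mathsf{B}_{\mathsf{R},0}^2+n\|\theta_*\|_2^2\mathsf{B}_{\mathsf{R},0}-2n\|\theta_*\|_2^4\big].$$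
   Context: These quantities are the deterministic equivalents of the bias/variance of the excess risk ($\mathsf{B}_{\mathsf{R},0},\mathsf{V}_{\mathsf{R},0}$) and of the squared $\ell_2$ norm ($\mathsf{B}_{\mathsf{N},0},\mathsf{V}_{\mathsf{N},0}$) of the minimum-norm random features interpolator with $n$ samples and $p$ features, feature spectrum $\Lambda$, target coefficients $\theta_*$ and noise variance $\sigma^2$; they are defined directly by the formulas in the claim, here with isotropic finite-rank spectrum $\Lambda=I_m$. *)

(* Defs.v *)
From mathcomp Require Import all_boot all_order all_algebra.
Set Implicit Arguments. Unset Strict Implicit. Unset Printing Implicit Defensive.
Import Order.TTheory GRing.Theory Num.Theory.
Local Open Scope ring_scope.

Section DE.
Variables (R : realFieldType) (m : nat).
Implicit Types (L : 'M[R]_m) (th : 'cV[R]_m) (lam : R) (n p : nat).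

Definition resolv L lam : 'M[R]_m := invmx (L + lam%:M).
Definition qform th (A : 'M[R]_m) : R := (th^T *m A *m th) 0 0.
Definition sqnorm th : R := (th^T *m th) 0 0.
Definition df1 L lam : R := \tr (L *m resolv L lam).
Definition df2 L lam : R := \tr (L *m L *m resolv L lam *m resolv L lam).

(* Over-parameterized regime p > n, lam = lambda_n *)
Definition BN0_over n p L th lam : R :=
  p%:R * qform th (resolv L lam) / (p%:R - n%:R).
Definition VN0_over n p (sigma2 : R) lam : R :=
  sigma2 * p%:R / (lam * (p%:R - n%:R)).
Definition BR0_over n p L th lam : R :=
  n%:R * lam ^+ 2 * qform th (resolv L lam *m resolv L lam) / (n%:R - df2 L lam)
  + n%:R * lam * qform th (resolv L lam) / (p%:R - n%:R).
Definition VR0_over n p L (sigma2 : R) lam : R :=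
  sigma2 * df2 L lam / (n%:R - df2 L lam) + sigma2 * n%:R / (p%:R - n%:R).

(* Under-parameterized regime p < n, lam = lambda_p *)
Definition BN0_under n p L th lam : R :=
  p%:R * qform th (L *m resolv L lam *m resolv L lam) / (n%:R - df2 L lam)
  + p%:R * qform th (resolv L lam) / (n%:R - p%:R).
Definition VN0_under n p (sigma2 : R) lam : R :=
  sigma2 * p%:R / (lam * (n%:R - p%:R)).
Definition BR0_under n p L th lam : R :=
  n%:R * lam * qform th (resolv L lam) / (n%:R - p%:R).
Definition VR0_under n p (sigma2 : R) : R :=
  sigma2 * p%:R / (n%:R - p%:R).
End DE.

(* Main.v *)
Require Import Defs.
From mathcomp Require Import all_boot all_order all_algebra.
From mathcomp Require Import ring lra.
Import Order.TTheory GRing.Theory Num.Theory.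
Local Open Scope ring_scope.

Section H.
Variables (R : realFieldType) (m : nat).

Lemma resolv1 (lam : R) : resolv (1%:M : 'M[R]_m) lam = ((1 + lam)^-1)%:M.
Proof. by rewrite /resolv -(raddfD (@scalar_mx R m)) invmx_scalar. Qed.

Lemma qformS (th : 'cV[R]_m) (c : R) : qform th c%:M = c * sqnorm th.
Proof. by rewrite /qform /sqnorm mul_mx_scalar -scalemxAl mxE. Qed.

Lemma df1S (lam : R) : df1 (1%:M : 'M[R]_m) lam = (1 + lam)^-1 * m%:R.
Proof. by rewrite /df1 resolv1 mul1mx mxtrace_scalar mulr_natr. Qed.

Lemma df2S (lam : R) : df2 (1%:M : 'M[R]_m) lam = ((1 + lam)^-1 * (1 + lam)^-1) * m%:R.
Proof.
by rewrite /df2 resolv1 !mul1mx -scalar_mxM mxtrace_scalar mulr_natr.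
Qed.
End H.

Theorem corollary7 (R : realFieldType) (m n p : nat) (th : 'cV[R]_m) (sigma2 : R) :
  (0 < n)%N -> (n < m)%N -> 0 <= sigma2 ->
  (* over-parameterized regime, Lambda = I_m, lam = lambda_n *)
  ((n < p)%N -> forall lam : R, 0 < lam -> df1 (1%:M : 'M[R]_m) lam = n%:R ->
     let R0 := BR0_over n p (1%:M : 'M[R]_m) th lam + VR0_over n p (1%:M : 'M[R]_m) sigma2 lam in
     let N0 := BN0_over n p (1%:M : 'M[R]_m) th lam + VN0_over n p sigma2 lam in
     R0 = (m%:R - n%:R) / n%:R * N0 + (2 * n%:R - m%:R) / (m%:R - n%:R) * sigma2)
  /\
  (* under-parameterized regime, Lambda = I_m, lam = lambda_p *)
  ((p < n)%N -> forall lam : R, 0 < lam -> df1 (1%:M : 'M[R]_m) lam = p%:R ->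
     let VR := VR0_under n p sigma2 in
     let VN := VN0_under n p sigma2 lam in
     let BR := BR0_under n p (1%:M : 'M[R]_m) th lam in
     let BN := BN0_under n p (1%:M : 'M[R]_m) th lam in
     let t2 := sqnorm th in
     VR ^+ 2 = (m%:R - n%:R) / n%:R * VR * VN + m%:R * sigma2 / n%:R * VN
     /\
     (m%:R - n%:R) * BN * (m%:R * BR - n%:R * t2) * (m%:R * BR ^+ 2 - n%:R * t2 ^+ 2)
     = n%:R * m%:R * (BR - t2) ^+ 2
       * (m%:R * BR ^+ 2 + n%:R * t2 * BR - 2 * n%:R * t2 ^+ 2)).
Proof.
move=> n0 nm s0.
have nR : (0 : R) < n%:R by rewrite ltr0n.
have mnR : (n%:R : R) < m%:R by rewrite ltr_nat.
split.
- move=> np lam l0 hdf R0 N0.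
  have pnR : (n%:R : R) < p%:R by rewrite ltr_nat.
  rewrite df1S in hdf.
  have l1 : (1 + lam) != 0 by apply/lt0r_neq0; lra.
  have hl : lam = (m%:R - n%:R) / n%:R.
    have hm : (m%:R : R) = n%:R * (1 + lam) by rewrite -hdf; field.
    by rewrite hm; field; apply/lt0r_neq0.
  rewrite /R0 /N0 /BR0_over /VR0_over /BN0_over /VN0_over df2S !resolv1
    -!scalar_mxM !qformS hl.
  set t := sqnorm th.
  have mR : (0 : R) < m%:R by lra.
  have h3 : 0 < n%:R * m%:R * (m%:R - n%:R :R) by rewrite !mulr_gt0 // subr_gt0.
  field; repeat (apply/andP; split); apply/negP => /eqP H; nra.
- move=> pn lam l0 hdf VR VN BR BN t2.
  have pnR : (p%:R : R) < n%:R by rewrite ltr_nat.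
  rewrite df1S in hdf.
  have l1 : (1 + lam) != 0 by apply/lt0r_neq0; lra.
  have hm : (m%:R : R) = p%:R * (1 + lam) by rewrite -hdf; field.
  have mR : (0 : R) < m%:R by lra.
  have pR : (0 : R) < p%:R by nra.
  have hl : lam = (m%:R - p%:R) / p%:R.
    by rewrite hm; field; apply/lt0r_neq0.
  rewrite /VR /VN /BR /BN /t2 /VR0_under /VN0_under /BR0_under /BN0_under df2S !resolv1
    !mul1mx -!scalar_mxM !qformS hl.
  set t := sqnorm th.
  have mpR : (p%:R : R) < m%:R by lra.
  split.
  + field; repeat (apply/andP; split); apply/negP => /eqP H; nra.
  + have h4 : (p%:R * p%:R : R) < n%:R * m%:R.
      by apply: ltr_pM; lra.
    have h5 : 0 < m%:R * (n%:R * m%:R - p%:R * p%:R : R) by rewrite mulr_gt0 // subr_gt0.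
    field; repeat (apply/andP; split); apply/negP => /eqP H.
    * lra.
    * lra.
    * lra.
    * have : n%:R * ((p%:R + (m%:R - p%:R)) * (p%:R + (m%:R - p%:R))) -
      p%:R * p%:R * m%:R = m%:R * (n%:R * m%:R - p%:R * p%:R : R) by ring.
      lra.
Qed.
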